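(* Let $M>0$ and $q,Q,g\in\mathbb{R}$, let $\mathbf{n}\in\mathbb{R}^3$ be a constant vector, and on $\{(\mathbf{x},\boldsymbol{\Pi}):\mathbf{x}\in\mathbb{R}^3\setminus\{0\},\ \boldsymbol{\Pi}\in\mathbb{R}^3\}$ consider the bracket $$\{P,R\}=\sum_i\Big(\frac{\partial P}{\partial x^i}\frac{\partial R}{\partial \Pi_i}-\frac{\partial P}{\partial \Pi_i}\frac{\partial R}{\partial x^i}\Big)+q\sum_{i,j}F_{ij}\frac{\partial P}{\partial \Pi_i}\frac{\partial R}{\partial \Pi_j},\qquad F_{ij}=\epsilon_{ijk}B^k,$$ where $\mathbf{B}(\mathbf{x})=\dfrac{g}{r^{5/2}}\,\mathbf{x}$, $r=|\mathbf{x}|$. Let $$H=\frac{\boldsymbol{\Pi}^2}{2M}+\frac{qQ}{r},\qquad \mathbf{L}=\mathbf{x}\times\boldsymbol{\Pi},\qquad \mathbf{K}_2=\boldsymbol{\Pi}\times\mathbf{L}+MqQ\,\frac{\mathbf{x}}{r}.$$ Then the function $$K=\mathbf{n}\cdot\Big(\mathbf{K}_2+\frac{2gq}{r^{1/2}}\,\mathbf{L}-2g^2q^2\,\frac{\mathbf{x}}{r}\Big)$$ satisfies $\{K,H\}=0$ identically.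
   Context: $\epsilon_{ijk}$ is the Levi-Civita symbol and indices are raised and lowered with the Euclidean metric $\delta_{ij}$. The variables $\Pi_i$ are the gauge-covariant (kinetic) momenta and the bracket above is the gauge-covariant Poisson bracket, in which the $\Pi_i$ are not canonical ($\{\Pi_i,\Pi_j\}=qF_{ij}$). This models a charge $q$ of mass $M$ moving in the Coulomb potential of a charge $Q$ superposed with the spherically symmetric magnetic field $\mathbf{B}$. *)

(* Defs.v *)
From Stdlib Require Import Reals.
Open Scope R_scope.

(* Vectors of R^3 are functions nat -> R; only components 0,1,2 are used. *)
Definition vec3 := nat -> R.

Definition sum3 (f : nat -> R) : R := f 0%nat + f 1%nat + f 2%nat.

Definition eps (i j k : nat) : R :=
  match i, j, k with
  | O, S O, S (S O) | S O, S (S O), O | S (S O), O, S O => 1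
  | O, S (S O), S O | S (S O), S O, O | S O, O, S (S O) => -1
  | _, _, _ => 0
  end.

Definition dot (a b : vec3) : R := sum3 (fun i => a i * b i).

Definition cross (a b : vec3) : vec3 :=
  fun i => sum3 (fun j => sum3 (fun k => eps i j k * a j * b k)).

Definition norm3 (x : vec3) : R := sqrt (dot x x).

Definition Bfield (g : R) (x : vec3) : vec3 :=
  fun k => g / Rpower (norm3 x) (5/2) * x k.

Definition Fmat (g : R) (x : vec3) (i j : nat) : R :=
  sum3 (fun k => eps i j k * Bfield g x k).

Definition upd (v : vec3) (i : nat) (t : R) : vec3 :=
  fun j => if Nat.eqb j i then t else v j.

Definition phasefun := vec3 -> vec3 -> R.

Definition partial_x (f : phasefun) (x p : vec3) (i : nat) (d : R) : Prop :=
  derivable_pt_lim (fun t => f (upd x i t) p) (x i) d.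

Definition partial_p (f : phasefun) (x p : vec3) (i : nat) (d : R) : Prop :=
  derivable_pt_lim (fun t => f x (upd p i t)) (p i) d.

(* The gauge-covariant bracket {P,R} at (x,p), expressed through the partial
   derivatives dPx_i = dP/dx^i, dPp_i = dP/dPi_i, etc. *)
Definition bracket_val (q g : R) (x : vec3)
    (dPx dPp dRx dRp : nat -> R) : R :=
  sum3 (fun i => dPx i * dRp i - dPp i * dRx i)
  + q * sum3 (fun i => sum3 (fun j => Fmat g x i j * dPp i * dRp j)).

Definition Ham (M q Q : R) : phasefun :=
  fun x p => dot p p / (2 * M) + q * Q / norm3 x.

Definition Lvec (x p : vec3) : vec3 := cross x p.

Definition K2vec (M q Q : R) (x p : vec3) : vec3 :=
  fun i => cross p (Lvec x p) i + M * q * Q * (x i / norm3 x).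

Definition Kfun (M q Q g : R) (n : vec3) : phasefun :=
  fun x p =>
    dot n (fun i => K2vec M q Q x p i
                    + 2 * g * q / Rpower (norm3 x) (1/2) * Lvec x p i
                    - 2 * g ^ 2 * q ^ 2 * (x i / norm3 x)).

(* Main.v *)
Require Import Defs.
From Stdlib Require Import Reals Lra Lia.
Open Scope R_scope.
Lemma dplus f g x a b : derivable_pt_lim f x a -> derivable_pt_lim g x b ->
  derivable_pt_lim (fun t => f t + g t) x (a + b).
Proof. intros; apply (derivable_pt_lim_plus f g); auto. Qed.
Lemma dminus f g x a b : derivable_pt_lim f x a -> derivable_pt_lim g x b ->
  derivable_pt_lim (fun t => f t - g t) x (a - b).
Proof. intros; apply (derivable_pt_lim_minus f g); auto. Qed.
Lemma dmult f g x a b : derivable_pt_lim f x a -> derivable_pt_lim g x b ->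
  derivable_pt_lim (fun t => f t * g t) x (a * g x + f x * b).
Proof. intros; apply (derivable_pt_lim_mult f g); auto. Qed.
Lemma ddiv f g x a b : derivable_pt_lim f x a -> derivable_pt_lim g x b -> g x <> 0 ->
  derivable_pt_lim (fun t => f t / g t) x ((a * g x - b * f x) / (g x)²).
Proof. intros; apply (derivable_pt_lim_div f g); auto. Qed.
Lemma dopp f x a : derivable_pt_lim f x a -> derivable_pt_lim (fun t => - f t) x (- a).
Proof. intros; apply (derivable_pt_lim_opp f); auto. Qed.
Lemma dconst c x : derivable_pt_lim (fun _ => c) x 0.
Proof. apply derivable_pt_lim_const. Qed.
Lemma did x : derivable_pt_lim (fun t => t) x 1.
Proof. apply derivable_pt_lim_id. Qed.
Lemma dsqrt f x a : derivable_pt_lim f x a -> 0 < f x ->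
  derivable_pt_lim (fun t => sqrt (f t)) x (/ (2 * sqrt (f x)) * a).
Proof. intros. apply (derivable_pt_lim_comp f sqrt); auto. apply derivable_pt_lim_sqrt; auto. Qed.
Lemma dpow f x a c : derivable_pt_lim f x a -> 0 < f x ->
  derivable_pt_lim (fun t => Rpower (f t) c) x (c * Rpower (f x) (c - 1) * a).
Proof. intros. apply (derivable_pt_lim_comp f (fun y => Rpower y c)); auto. apply derivable_pt_lim_power; auto. Qed.
Ltac dtac := match goal with
| |- derivable_pt_lim (fun _ => ?c) _ _ => apply dconst
| |- derivable_pt_lim (fun t => t) _ _ => apply did
| |- derivable_pt_lim (fun t => @?A t + @?B t) _ _ => eapply (dplus A B); [dtac|dtac]
| |- derivable_pt_lim (fun t => @?A t - @?B t) _ _ => eapply (dminus A B); [dtac|dtac]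
| |- derivable_pt_lim (fun t => @?A t * @?B t) _ _ => eapply (dmult A B); [dtac|dtac]
| |- derivable_pt_lim (fun t => @?A t / @?B t) _ _ => eapply (ddiv A B); [dtac|dtac|]
| |- derivable_pt_lim (fun t => - @?A t) _ _ => eapply (dopp A); dtac
| |- derivable_pt_lim (fun t => sqrt (@?A t)) _ _ => eapply (dsqrt A); [dtac|]
| |- derivable_pt_lim (fun t => Rpower (@?A t) ?c) _ _ => eapply (dpow A); [dtac|]
end.

Ltac unf := cbv beta iota delta [partial_x partial_p Kfun K2vec Lvec cross dot sum3 norm3 eps upd Nat.eqb Ham].

Lemma S_pos (x : vec3) : (x 0%nat, x 1%nat, x 2%nat) <> (0, 0, 0) ->
  0 < x 0%nat * x 0%nat + x 1%nat * x 1%nat + x 2%nat * x 2%nat.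
Proof.
  intros H.
  destruct (Req_dec (x 0%nat) 0) as [h0|h0];
  destruct (Req_dec (x 1%nat) 0) as [h1|h1];
  destruct (Req_dec (x 2%nat) 0) as [h2|h2];
  try (rewrite h0, h1, h2 in H; now elim H);
  first [ assert (0 < x 0%nat * x 0%nat) by (apply Rsqr_pos_lt; auto)
        | assert (0 < x 1%nat * x 1%nat) by (apply Rsqr_pos_lt; auto)
        | assert (0 < x 2%nat * x 2%nat) by (apply Rsqr_pos_lt; auto) ];
  nra.
Qed.

Ltac side HS := first
  [ exact HS
  | apply sqrt_lt_R0; exact HS
  | apply Rgt_not_eq; apply sqrt_lt_R0; exact HS
  | apply Rgt_not_eq; unfold Rpower; apply exp_pos
  | lra ].


Ltac getd HS H :=
  let E := fresh "E" in
  match type of H with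
  | derivable_pt_lim ?f ?t ?d =>
      eassert (E : derivable_pt_lim f t _) by (unf; dtac; side HS);
      rewrite (uniqueness_limite f t d _ H E); clear E H
  end.

Lemma bracket_zero : forall (M q Q g : R) (n x p : vec3), 0 < M ->
    (x 0%nat, x 1%nat, x 2%nat) <> (0, 0, 0) ->
    (forall dKx dKp dHx dHp : nat -> R,
       (forall i : nat, (i < 3)%nat ->
          partial_x (Kfun M q Q g n) x p i (dKx i) /\
          partial_p (Kfun M q Q g n) x p i (dKp i) /\
          partial_x (Ham M q Q) x p i (dHx i) /\
          partial_p (Ham M q Q) x p i (dHp i)) ->
       bracket_val q g x dKx dKp dHx dHp = 0).
Proof.
  intros M q Q g n x p HM Hx. pose proof (S_pos x Hx) as HS.
  intros dKx dKp dHx dHp Hd.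
  destruct (Hd 0%nat ltac:(lia)) as [a0 [b0 [c0 d0]]].
  destruct (Hd 1%nat ltac:(lia)) as [a1 [b1 [c1 d1]]].
  destruct (Hd 2%nat ltac:(lia)) as [a2 [b2 [c2 d2]]].
  unfold bracket_val, Fmat, Bfield, sum3, eps.
  unfold partial_x, partial_p in *.
  getd HS a0. getd HS a1. getd HS a2.
  getd HS b0. getd HS b1. getd HS b2.
  getd HS c0. getd HS c1. getd HS c2.
  getd HS d0. getd HS d1. getd HS d2.
  cbv beta delta [norm3 dot sum3].
  set (r := sqrt (x 0%nat * x 0%nat + x 1%nat * x 1%nat + x 2%nat * x 2%nat)) in *.
  assert (Hr : 0 < r) by (apply sqrt_lt_R0; exact HS).
  assert (Hrr : r * r = x 0%nat * x 0%nat + x 1%nat * x 1%nat + x 2%nat * x 2%nat)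
    by (apply sqrt_sqrt; lra).
  set (u := Rpower r (1/2)) in *.
  assert (Hu0 : 0 < u) by (unfold u, Rpower; apply exp_pos).
  assert (Hu : u * u = r).
  { unfold u. rewrite <- Rpower_plus. replace (1/2 + 1/2) with 1 by field. apply Rpower_1; lra. }
  assert (E1 : Rpower r (1/2 - 1) = u / r).
  { replace (1/2 - 1) with (1/2 + - (1)) by field. rewrite Rpower_plus, Rpower_Ropp, Rpower_1 by lra. fold u. field. lra. }
  assert (E2 : Rpower r (5/2) = r * r * u).
  { replace (5/2) with (INR 2 + 1/2) by (simpl; field). rewrite Rpower_plus, Rpower_pow by lra. fold u. simpl. ring. }
  rewrite E1, E2. clear E1 E2.
  clearbody u r. clear Hd HS Hx.
  generalize dependent (x 0%nat); generalize dependent (x 1%nat); generalize dependent (x 2%nat).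
  generalize (p 0%nat) (p 1%nat) (p 2%nat) (n 0%nat) (n 1%nat) (n 2%nat).
  intros. unfold Rsqr.
  field_simplify; [ | lra.. ].
  unfold Rdiv. apply Rmult_eq_0_compat_r.
  assert (U2 : u ^ 2 = r) by (rewrite <- Hu; ring).
  assert (U3 : u ^ 3 = u * r) by (rewrite <- Hu; ring).
  assert (U4 : u ^ 4 = r * r) by (rewrite <- Hu; ring).
  rewrite ?U4, ?U3, ?U2.
  ring_simplify.
  assert (R2 : r ^ 2 = r * r) by ring.
  assert (R3 : r ^ 3 = r * (r * r)) by ring.
  assert (R4 : r ^ 4 = (r * r) * (r * r)) by ring.
  rewrite ?R4, ?R3, ?R2, ?Hrr.
  ring.
Qed.

Theorem mainTheorem2 :
  forall (M q Q g : R) (n x p : vec3),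
    0 < M ->
    (x 0%nat, x 1%nat, x 2%nat) <> (0, 0, 0) ->
    (* all first partial derivatives of K and H exist at (x, p) ... *)
    (forall i : nat, (i < 3)%nat ->
       (exists d, partial_x (Kfun M q Q g n) x p i d) /\
       (exists d, partial_p (Kfun M q Q g n) x p i d) /\
       (exists d, partial_x (Ham M q Q) x p i d) /\
       (exists d, partial_p (Ham M q Q) x p i d)) /\
    (* ... and {K, H} = 0 at (x, p) *)
    (forall dKx dKp dHx dHp : nat -> R,
       (forall i : nat, (i < 3)%nat ->
          partial_x (Kfun M q Q g n) x p i (dKx i) /\
          partial_p (Kfun M q Q g n) x p i (dKp i) /\
          partial_x (Ham M q Q) x p i (dHx i) /\
          partial_p (Ham M q Q) x p i (dHp i)) ->
       bracket_val q g x dKx dKp dHx dHp = 0).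
Proof.
  intros M q Q g n x p HM Hx. split.
  - pose proof (S_pos x Hx) as HS.
    intros i Hi. destruct i as [|[|[|i]]]; [| | | lia];
    repeat split; eexists; unf; dtac; side HS.
  - apply bracket_zero; assumption.
Qed.
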